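(* Let $(X,d)$ be a complete metric space and let $T:X\to X$ be a mapping for which there exists $\alpha\in[0,1)$ such that $$d(Tx,T^2x)+d(T^2x,Ty)+d(Ty,Tx)\le \alpha\,[\,d(x,Tx)+d(Tx,y)+d(y,x)\,]$$ for all $x,y\in X$ with $x\neq y$ and $y\neq Tx$ (i.e. $T$ is a generalized orbital triangular contraction). Suppose that $T$ has no periodic points of prime period $2$. Then $T$ has a unique fixed point.
   Context: A point $x\in X$ is a periodic point of period $n$ of $T$ if $T^n x=x$; the least positive integer $n$ with $T^nx=x$ is its prime period. Thus ''no periodic points of prime period $2$'' means there is no $x\in X$ with $T^2x=x$ and $Tx\neq x$. The condition ''$x\neq y\neq Tx$'' in the paper means $x\neq y$ and $y\neq Tx$. *)

(* Defs.v *)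
From Stdlib Require Import Reals.
Open Scope R_scope.

Definition is_metric {X : Type} (d : X -> X -> R) : Prop :=
  (forall x y, 0 <= d x y) /\
  (forall x y, d x y = 0 <-> x = y) /\
  (forall x y, d x y = d y x) /\
  (forall x y z, d x z <= d x y + d y z).

Definition d_cauchy {X : Type} (d : X -> X -> R) (u : nat -> X) : Prop :=
  forall eps, 0 < eps -> exists N, forall m n, (N <= m)%nat -> (N <= n)%nat ->
    d (u m) (u n) < eps.

Definition d_converges {X : Type} (d : X -> X -> R) (u : nat -> X) (l : X) : Prop :=
  forall eps, 0 < eps -> exists N, forall n, (N <= n)%nat -> d (u n) l < eps.

Definition d_complete {X : Type} (d : X -> X -> R) : Prop :=
  forall u, d_cauchy d u -> exists l, d_converges d u l.

Definition gen_orbital_triangular_contraction {X : Type} (d : X -> X -> R)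
    (T : X -> X) : Prop :=
  exists alpha, 0 <= alpha < 1 /\
    forall x y, x <> y -> y <> T x ->
      d (T x) (T (T x)) + d (T (T x)) (T y) + d (T y) (T x)
        <= alpha * (d x (T x) + d (T x) y + d y x).

Definition no_prime_period_2 {X : Type} (T : X -> X) : Prop :=
  forall x, T (T x) = x -> T x = x.

(* Main.v *)
Require Import Defs.
From Stdlib Require Import Reals.
From Stdlib Require Import Lra Lia Psatz Classical.
Open Scope R_scope.

Lemma fix_uniq (X : Type) (d : X -> X -> R) (T : X -> X)
  (Hd : is_metric d) (alpha : R) (Ha : 0 <= alpha < 1)
  (HC : forall x y, x <> y -> y <> T x ->
      d (T x) (T (T x)) + d (T (T x)) (T y) + d (T y) (T x)
        <= alpha * (d x (T x) + d (T x) y + d y x)) :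
  forall u v, T u = u -> T v = v -> v = u.
Proof.
  destruct Hd as [Hpos [Hzero [Hsym Htri]]].
  intros u v Hu Hv.
  destruct (classic (v = u)) as [E|E]; auto.
  assert (H := HC u v (not_eq_sym E) ltac:(rewrite Hu; exact E)).
  rewrite !Hu, Hv in H.
  rewrite (proj2 (Hzero u u) eq_refl), (Hsym v u) in H.
  assert (P : d u v <> 0) by (intro Z; apply E; symmetry; apply Hzero; auto).
  pose proof (Hpos u v). exfalso. assert (0 < d u v) by lra. nra.
Qed.

Lemma fix_exists (X : Type) (x0 : X) (d : X -> X -> R) (T : X -> X)
  (Hd : is_metric d) (Hc : d_complete d) (alpha : R) (Ha : 0 <= alpha < 1)
  (HC : forall x y, x <> y -> y <> T x ->
      d (T x) (T (T x)) + d (T (T x)) (T y) + d (T y) (T x)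
        <= alpha * (d x (T x) + d (T x) y + d y x))
  (Hp : no_prime_period_2 T) :
  exists z, T z = z.
Proof.
  destruct Hd as [Hpos [Hzero [Hsym Htri]]].
  set (x := fun n => Nat.iter n T x0).
  assert (HxS : forall n, x (S n) = T (x n)) by reflexivity.
  destruct (classic (exists n, T (x n) = x n)) as [[n Hn]|Hno].
  { exists (x n); auto. }
  assert (H1 : forall n, x (S n) <> x n).
  { intros n E; apply Hno; exists n; rewrite <- HxS; auto. }
  assert (H2 : forall n, x (S (S n)) <> x n).
  { intros n E; apply (H1 n). rewrite HxS. apply Hp.
    change (x (S (S n)) = x n). exact E. }
  set (q := fun n => d (x n) (x (S n)) + d (x (S n)) (x (S (S n)))
                     + d (x (S (S n))) (x n)).
  assert (Hq : forall n, q (S n) <= alpha * q n).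
  { intro n. unfold q.
    assert (Hy : x (S (S n)) <> T (x n)) by (rewrite <- HxS; apply H1).
    exact (HC (x n) (x (S (S n))) (not_eq_sym (H2 n)) Hy). }
  assert (Hqpow : forall n, q n <= alpha ^ n * q O).
  { induction n. simpl; lra.
    simpl. rewrite Rmult_assoc. eapply Rle_trans. apply Hq.
    apply Rmult_le_compat_l; lra. }
  assert (Hq0 : 0 <= q O).
  { unfold q. pose proof (Hpos (x 0%nat) (x 1%nat)).
    pose proof (Hpos (x 1%nat) (x 2%nat)). pose proof (Hpos (x 2%nat) (x 0%nat)). lra. }
  assert (Hstep : forall n, d (x n) (x (S n)) <= alpha ^ n * q O).
  { intro n. eapply Rle_trans; [|apply Hqpow]. unfold q.
    pose proof (Hpos (x (S n)) (x (S (S n)))). pose proof (Hpos (x (S (S n))) (x n)). lra. }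
  assert (Hgeo : forall n k, d (x n) (x (n + k)%nat) * (1 - alpha)
                             <= q O * (alpha ^ n - alpha ^ (n + k))).
  { intros n k. induction k.
    - rewrite Nat.add_0_r, (proj2 (Hzero _ _) eq_refl). nra.
    - rewrite Nat.add_succ_r.
      pose proof (Htri (x n) (x (n + k)%nat) (x (S (n + k)))) as Ht.
      pose proof (Hstep (n + k)%nat) as Hs.
      simpl pow.
      assert (d (x n) (x (S (n + k))) * (1 - alpha) <=
              (d (x n) (x (n + k)%nat) + d (x (n + k)%nat) (x (S (n + k)))) * (1 - alpha))
        by (apply Rmult_le_compat_r; lra).
      assert (d (x (n + k)%nat) (x (S (n + k))) * (1 - alpha) <=
              alpha ^ (n + k) * q O * (1 - alpha))
        by (apply Rmult_le_compat_r; lra).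
      nra. }
  assert (Hcau : d_cauchy d x).
  { intros eps Heps.
    set (y := eps * (1 - alpha) / (q O + 1)).
    assert (Hy : 0 < y) by (unfold y; apply Rdiv_lt_0_compat; nra).
    assert (Hy2 : y * (q O + 1) = eps * (1 - alpha)) by (unfold y; field; lra).
    assert (Habs : Rabs alpha < 1) by (rewrite Rabs_right; lra).
    destruct (pow_lt_1_zero alpha Habs y Hy) as [N HN].
    assert (Hle : forall n m, (n <= m)%nat -> (N <= n)%nat -> d (x n) (x m) < eps).
    { intros n m Hnm HNn.
      replace m with (n + (m - n))%nat by lia.
      pose proof (Hgeo n (m - n)%nat) as G.
      pose proof (pow_le alpha (n + (m - n)) (proj1 Ha)).
      pose proof (HN n HNn) as Hn. rewrite Rabs_right in Hn by (apply Rle_ge, pow_le; lra).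
      assert (q O * alpha ^ n <= q O * y) by (apply Rmult_le_compat_l; lra).
      assert (d (x n) (x (n + (m - n))%nat) * (1 - alpha) < eps * (1 - alpha)) by nra.
      apply Rmult_lt_reg_r with (1 - alpha); lra. }
    exists N. intros m n Hm Hn.
    destruct (Nat.le_gt_cases m n).
    - apply Hle; auto.
    - rewrite Hsym. apply Hle; auto; lia. }
  destruct (Hc x Hcau) as [z Hz].
  exists z.
  assert (Hgood : forall N, exists n, (N <= n)%nat /\ x n <> z /\ x (S n) <> z).
  { intro N. destruct (classic (x N = z)) as [E|E].
    - exists (S N). split. lia. rewrite <- E. split; [apply H1|apply H2].
    - destruct (classic (x (S N) = z)) as [E'|E'].
      + exists (S (S N)). split. lia. rewrite <- E'. split; [apply H1|apply H2].
      + exists N. split; auto. }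
  assert (Hsmall : forall eps, 0 < eps -> d z (T z) < eps).
  { intros eps Heps.
    destruct (Hz (eps / 5)) as [N1 HN1]. lra.
    assert (Habs : Rabs alpha < 1) by (rewrite Rabs_right; lra).
    assert (Hy : 0 < eps / 5 / (q O + 1)) by (apply Rdiv_lt_0_compat; lra).
    destruct (pow_lt_1_zero alpha Habs _ Hy) as [N2 HN2].
    destruct (Hgood (N1 + N2)%nat) as [n [Hn [Hxn HxSn]]].
    assert (Hy' : x n <> z) by auto.
    assert (Hz' : z <> T (x n)) by (rewrite <- HxS; auto).
    pose proof (HC (x n) z Hy' Hz') as K.
    rewrite <- !HxS in K.
    pose proof (HN1 n ltac:(lia)) as A1.
    pose proof (HN1 (S n) ltac:(lia)) as A2.
    pose proof (HN2 n ltac:(lia)) as A3.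
    rewrite Rabs_right in A3 by (apply Rle_ge, pow_le; lra).
    pose proof (Hstep n) as A4.
    assert (alpha ^ n * q O <= eps / 5 / (q O + 1) * q O) by (apply Rmult_le_compat_r; lra).
    assert (eps / 5 / (q O + 1) * q O < eps / 5).
    { assert (eps / 5 / (q O + 1) * q O = eps / 5 * (q O / (q O + 1))) by (field; lra).
      assert (q O / (q O + 1) < 1) by (apply (Rmult_lt_reg_r (q O + 1)); [lra|]; field_simplify; lra). nra. }
    set (S0 := d (x n) (x (S n)) + d (x (S n)) z + d z (x n)) in K.
    assert (0 <= S0) by (unfold S0; pose proof (Hpos (x n) (x (S n)));
      pose proof (Hpos (x (S n)) z); pose proof (Hpos z (x n)); lra).
    assert (S0 < 3 * eps / 5) by (unfold S0; rewrite (Hsym z); lra).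
    assert (alpha * S0 <= S0) by nra.
    pose proof (Hpos (x (S n)) (x (S (S n)))).
    pose proof (Hpos (x (S (S n))) (T z)).
    pose proof (Htri z (x (S n)) (T z)).
    pose proof (Hsym (T z) (x (S n))). pose proof (Hsym z (x (S n))).
    lra. }
  destruct (classic (T z = z)) as [E|E]; auto.
  exfalso. assert (0 < d z (T z)).
  { destruct (Rle_lt_or_eq_dec 0 _ (Hpos z (T z))); auto.
    exfalso; apply E; symmetry; apply Hzero; auto. }
  pose proof (Hsmall _ H). lra.
Qed.

Theorem theorem3p1 (X : Type) (x0 : X) (d : X -> X -> R) (T : X -> X)
  (Hd : is_metric d) (Hc : d_complete d)
  (HT : gen_orbital_triangular_contraction d T)
  (Hp : no_prime_period_2 T) :
  exists x, T x = x /\ forall y, T y = y -> y = x.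
Proof.
  destruct HT as [alpha [Ha HC]].
  destruct (fix_exists X x0 d T Hd Hc alpha Ha HC Hp) as [z Hz].
  exists z. split; auto.
  intros y Hy. exact (fix_uniq X d T Hd alpha Ha HC z y Hz Hy).
Qed.
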